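(* Let $R$ be an almost Dedekind domain, let $G_\cap(R)=\{\nu_I\mid I\in\mathrm{Inv}(R)\}\cap\mathcal{C}_c(\mathcal{M},\mathbb{Z})$ and $G_r(R)=\mathcal{C}_c(\mathcal{M},\mathbb{Z})/G_\cap(R)$. Then there is a surjective group homomorphism $\mathcal{C}_c(\partial(\mathcal{M}),\mathbb{Z})\to G_r(R)$, where $\partial(\mathcal{M})$ is the set of non-isolated points of $\mathcal{M}$.
   Context: $R$ almost Dedekind: $R_M$ is a DVR with valuation $v_M$ for each maximal $M$. $\mathcal{M}$ is $\mathrm{Max}(R)$ with the inverse topology (restriction of the coarsest topology on $\mathrm{Spec}(R)$ in which Zariski-open Zariski-compact sets are closed); subsets carry the subspace topology. For nonzero fractional $I$, $\nu_I(M)=\inf\{v_M(i)\mid i\in I\setminus\{0\}\}$. $\mathrm{Inv}(R)$ is the group of invertible fractional ideals. $\mathcal{C}_c(X,\mathbb{Z})$: continuous compactly supported functions $X\to\mathbb{Z}$ ($\mathbb{Z}$ discrete), under pointwise addition. *)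

(* Defs.v *)
From HB Require Import structures.
From mathcomp Require Import all_boot all_order all_algebra fraction.
From mathcomp Require Import boolp classical_sets.
Set Implicit Arguments. Unset Strict Implicit. Unset Printing Implicit Defensive.
Import Order.TTheory GRing.Theory Num.Theory.
Local Open Scope classical_set_scope.
Local Open Scope ring_scope.

Section AlmostDedekind.
Variable R : idomainType.
Local Notation F := {fraction R}.

Definition inF (r : R) : F := tofrac r.

Definition ideal (I : set R) : Prop :=
  I 0 /\ (forall x y, I x -> I y -> I (x + y)) /\ (forall r x, I x -> I (r * x)).
Definition prime_ideal (P : set R) : Prop :=
  ideal P /\ ~ P 1 /\ (forall a b, P (a * b) -> P a \/ P b).
Definition maximal_ideal (M : set R) : Prop :=
  ideal M /\ ~ M 1 /\ (forall J, ideal J -> M `<=` J -> J = M \/ J 1).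

Definition MaxT : Type := {M : set R | maximal_ideal M}.

Definition zariski_open (U : set (set R)) : Prop :=
  exists S : set R, U = [set P | prime_ideal P /\ ~ (S `<=` P)].
Definition zariski_compact (U : set (set R)) : Prop :=
  forall Fam : set (set (set R)), (forall V, Fam V -> zariski_open V) ->
    U `<=` \bigcup_(V in Fam) V ->
    exists (n : nat) (G : 'I_n -> set (set R)),
      (forall i, Fam (G i)) /\ U `<=` \bigcup_(i in [set: 'I_n]) G i.
(* Open sets of the inverse topology on Spec(R): the topology generated
   (unions of finite intersections) by the complements in Spec(R) of the
   Zariski-open Zariski-compact sets. *)
Definition inverse_open (O : set (set R)) : Prop :=
  O `<=` prime_ideal /\
  forall P, O P -> exists (n : nat) (U : 'I_n -> set (set R)),
    (forall i, zariski_open (U i) /\ zariski_compact (U i)) /\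
    (forall i, ~ U i P) /\
    (forall Q, prime_ideal Q -> (forall i, ~ U i Q) -> O Q).

Definition Max_open (W : set MaxT) : Prop :=
  exists O, inverse_open O /\ forall M : MaxT, W M <-> O (proj1_sig M).
Definition Max_compact (A : set MaxT) : Prop :=
  forall Fam : set (set MaxT), (forall W, Fam W -> Max_open W) ->
    A `<=` \bigcup_(W in Fam) W ->
    exists (n : nat) (G : 'I_n -> set MaxT),
      (forall i, Fam (G i)) /\ A `<=` \bigcup_(i in [set: 'I_n]) G i.
(* C_c(𝓜, Z), Z discrete: all preimages open, support compact *)
Definition Cc_Max (f : MaxT -> int) : Prop :=
  (forall A : set int, Max_open (f @^-1` A)) /\ Max_compact [set M | f M != 0].

Definition isolated (M : MaxT) : Prop := Max_open [set M].
Definition BdT : Type := {M : MaxT | ~ isolated M}.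
Definition Bd_open (W : set BdT) : Prop :=
  exists O, Max_open O /\ forall x : BdT, W x <-> O (proj1_sig x).
Definition Bd_compact (A : set BdT) : Prop :=
  forall Fam : set (set BdT), (forall W, Fam W -> Bd_open W) ->
    A `<=` \bigcup_(W in Fam) W ->
    exists (n : nat) (G : 'I_n -> set BdT),
      (forall i, Fam (G i)) /\ A `<=` \bigcup_(i in [set: 'I_n]) G i.
Definition Cc_Bd (g : BdT -> int) : Prop :=
  (forall A : set int, Bd_open (g @^-1` A)) /\ Bd_compact [set x | g x != 0].

Definition localization (M : MaxT) : set F :=
  [set x | exists a s : R, ~ proj1_sig M s /\ x = inF a / inF s].
(* v is a surjective discrete valuation F^* -> Z (values at 0 irrelevant) *)
Definition discrete_valuation (w : F -> int) : Prop :=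
  (forall x y, x != 0 -> y != 0 -> w (x * y) = w x + w y) /\
  (forall x y, x != 0 -> y != 0 -> x + y != 0 -> Num.min (w x) (w y) <= w (x + y)) /\
  (forall n : int, exists x, x != 0 /\ w x = n).
(* R is almost Dedekind, and v M is the valuation v_M of the DVR R_M *)
Definition almost_dedekind_with (v : MaxT -> F -> int) : Prop :=
  forall M : MaxT, discrete_valuation (v M) /\
    localization M = [set x | x != 0 -> 0 <= v M x].

Definition Rsubmodule (I : set F) : Prop :=
  I 0 /\ (forall x y, I x -> I y -> I (x + y)) /\ (forall r x, I x -> I (inF r * x)).
Definition fractional_ideal (I : set F) : Prop :=
  Rsubmodule I /\ (exists x, I x /\ x != 0) /\
  exists d : R, d != 0 /\ forall x, I x -> exists r : R, inF d * x = inF r.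
Definition ideal_mul (I J : set F) : set F :=
  [set x | exists (n : nat) (a b : 'I_n -> F),
     (forall i, I (a i) /\ J (b i)) /\ x = \sum_(i < n) a i * b i].
Definition invertible_ideal (I : set F) : Prop :=
  fractional_ideal I /\
  exists J, fractional_ideal J /\ ideal_mul I J = [set x | exists r : R, x = inF r].

(* nu_I(M) = inf { v_M(i) | i in I \ 0 } ; "is_nu v I M n" says this inf is n *)
Definition is_nu (v : MaxT -> F -> int) (I : set F) (M : MaxT) (n : int) : Prop :=
  (forall i, I i -> i != 0 -> n <= v M i) /\
  (forall m : int, (forall i, I i -> i != 0 -> m <= v M i) -> m <= n).

Definition Gcap (v : MaxT -> F -> int) (f : MaxT -> int) : Prop :=
  (exists I, invertible_ideal I /\ forall M, is_nu v I M (f M)) /\ Cc_Max f.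

End AlmostDedekind.

(* Main.v *)
Require Import Defs.
From HB Require Import structures.
From mathcomp Require Import all_boot all_order all_algebra fraction.
From mathcomp Require Import boolp classical_sets.
From mathcomp Require Import ring.
Import Order.TTheory GRing.Theory Num.Theory.
Set Implicit Arguments. Unset Strict Implicit. Unset Printing Implicit Defensive.
Local Open Scope classical_set_scope.
Local Open Scope ring_scope.

Section Main.
Variable R : idomainType.
Local Notation F := {fraction R}.
Local Notation MT := (MaxT R).

Lemma inF0 : inF (0 : R) = 0. Proof. exact: tofrac0. Qed.
Lemma inF1 : inF (1 : R) = 1. Proof. exact: tofrac1. Qed.
Lemma inFD (a b : R) : inF (a + b) = inF a + inF b. Proof. exact: tofracD. Qed.
Lemma inFM (a b : R) : inF (a * b) = inF a * inF b. Proof. exact: tofracM. Qed.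
Lemma inFN (a : R) : inF (- a) = - inF a. Proof. exact: tofracN. Qed.
Lemma inF_inj (a b : R) : inF a = inF b -> a = b.
Proof. by move=> h; apply/eqP; rewrite -tofrac_eq; apply/eqP. Qed.
Lemma inF_eq0 (a : R) : (inF a == 0) = (a == 0).
Proof. exact: tofrac_eq0. Qed.

Lemma ideal0 (I : set R) : ideal I -> I 0. Proof. by case. Qed.
Lemma idealD (I : set R) x y : ideal I -> I x -> I y -> I (x + y).
Proof. by case=> _ [h _]; apply: h. Qed.
Lemma idealM (I : set R) r x : ideal I -> I x -> I (r * x).
Proof. by case=> _ [_ h]; apply: h. Qed.
Lemma idealMr (I : set R) r x : ideal I -> I x -> I (x * r).
Proof. by move=> hI hx; rewrite mulrC; apply: idealM. Qed.
Lemma idealN (I : set R) x : ideal I -> I x -> I (- x).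
Proof. by move=> hI hx; rewrite -mulN1r; apply: idealM. Qed.
Lemma idealB (I : set R) x y : ideal I -> I x -> I y -> I (x - y).
Proof. by move=> hI hx hy; apply: idealD => //; apply: idealN. Qed.

Lemma ideal_sum (I : set R) (T : eqType) (s : seq T) (f : T -> R) :
  ideal I -> (forall p, p \in s -> I (f p)) -> I (\sum_(p <- s) f p).
Proof.
move=> hI; elim: s => [|p s IH] h; first by rewrite big_nil; apply: ideal0.
rewrite big_cons; apply: idealD => //; first by apply: h; rewrite inE eqxx.
by apply: IH => q hq; apply: h; rewrite inE hq orbT.
Qed.

Definition span (X : set R) : set R :=
  [set x | exists s : seq (R * R), (forall p, p \in s -> X p.2) /\
     x = \sum_(p <- s) p.1 * p.2].

Lemma span_ideal X : ideal (span X).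
Proof.
split; first by exists [::]; split => //; rewrite big_nil.
split.
  move=> x y [s [hs ->]] [t [ht ->]]; exists (s ++ t); split; last by rewrite big_cat.
  by move=> p; rewrite mem_cat => /orP [] ?; [apply: hs|apply: ht].
move=> r x [s [hs ->]]; exists [seq (r * p.1, p.2) | p <- s]; split.
  by move=> p /mapP [q hq ->] /=; apply: hs.
by rewrite big_map big_distrr /=; apply: eq_bigr => p _; rewrite mulrA.
Qed.

Lemma span_sub X : X `<=` span X.
Proof.
move=> x hx; exists [:: (1, x)]; split; last by rewrite big_seq1 mul1r.
by move=> p; rewrite inE => /eqP ->.
Qed.

Lemma span_min X (I : set R) : ideal I -> X `<=` I -> span X `<=` I.
Proof.
move=> hI hX x [s [hs ->]]; apply: ideal_sum => // p hp.
by apply: idealM => //; apply: hX; apply: hs.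
Qed.

Lemma prime_avoid (I S : set R) : ideal I -> S 1 ->
  (forall a b, S a -> S b -> S (a * b)) -> (forall x, I x -> ~ S x) ->
  exists P, prime_ideal P /\ I `<=` P /\ (forall x, P x -> ~ S x) /\
    (forall J, ideal J -> P `<=` J -> (forall x, J x -> ~ S x) -> J = P).
Proof.
move=> hI S1 SM IS.
pose Ps := [set J : set R | J = set0 \/ (ideal J /\ I `<=` J /\ forall x, J x -> ~ S x)].
have [|A [PA Amax]] := @Zorn_bigcup R Ps.
  move=> Fm FP Ftot.
  have [allz|] := pselect (forall J, Fm J -> J = set0).
    by left; apply/seteqP; split => // x [J FJ]; rewrite (allz _ FJ).
  move=> /existsNP [J0 /not_implyP [FJ0 J0n]].
  have [//|[iJ0 [IJ0 SJ0]]] := FP _ FJ0.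
  have mem_ok : forall J x, Fm J -> J x -> ideal J /\ I `<=` J /\ forall x, J x -> ~ S x.
    by move=> J x FJ Jx; case: (FP _ FJ) => // eJ; rewrite eJ in Jx.
  right; split; [split; [|split]|split].
  - by exists J0 => //; apply: ideal0.
  - move=> x y [J1 F1 x1] [J2 F2 y2].
    have [i1 _] := mem_ok _ _ F1 x1; have [i2 _] := mem_ok _ _ F2 y2.
    have [s12|s21] := Ftot _ _ F1 F2.
    + by exists J2 => //; apply: idealD => //; apply: s12.
    + by exists J1 => //; apply: idealD => //; apply: s21.
  - move=> r x [J FJ Jx]; have [i _] := mem_ok _ _ FJ Jx; exists J => //; exact: idealM.
  - by move=> x Ix; exists J0 => //; apply: IJ0.
  - move=> x [J FJ Jx]; have [_ [_ h]] := mem_ok _ _ FJ Jx; exact: h.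
case: PA => [A0|[iA [IA SA]]].
  exfalso; apply: (Amax I); last by right; split => //; split.
  rewrite A0; split; first by [].
  by move=> h; have := h 0 (ideal0 hI).
have maxA : forall J, ideal J -> A `<=` J -> (forall x, J x -> ~ S x) -> J = A.
  move=> J iJ AJ SJ; apply: contrapT => nJA.
  apply: (Amax J); last by right; split => //; split => // x /IA /AJ.
  split => // h; apply: nJA; apply/seteqP; split => //.
exists A; split; last by split.
split => //; split; first by move=> /SA; apply.
move=> a b Aab; apply: contrapT => /not_orP [na nb].
pose Ja := [set x | exists p r, A p /\ x = p + r * a].
pose Jb := [set x | exists p r, A p /\ x = p + r * b].
have iJ : forall c, ideal [set x | exists p r, A p /\ x = p + r * c].
  move=> c; split; first by exists 0, 0; split; [exact: ideal0|rewrite mul0r addr0].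
  split.
    move=> x y [p [r [Ap ->]]] [q [t [Aq ->]]]; exists (p + q), (r + t); split.
      exact: idealD. by rewrite mulrDl addrACA.
  move=> t x [p [r [Ap ->]]]; exists (t * p), (t * r); split; first exact: idealM.
  by rewrite mulrDr mulrA.
have sub : forall c, A `<=` [set x | exists p r, A p /\ x = p + r * c].
  by move=> c x Ax; exists x, 0; rewrite mul0r addr0.
have getS : forall c, ~ A c -> exists p r, A p /\ S (p + r * c).
  move=> c nc; apply: contrapT => hn.
  have := maxA _ (iJ c) (sub c).
  have H : (forall x, [set x | exists p r, A p /\ x = p + r * c] x -> ~ S x).
    move=> x [p [r [Ap ->]]] Sx; apply: hn; by exists p, r.
  move=> /(_ H) eq; apply: nc; rewrite -eq; exists 0, 1; split; first exact: ideal0.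
  by rewrite mul1r add0r.
have [p [r [Ap Sp]]] := getS _ na; have [q [t [Aq Sq]]] := getS _ nb.
apply: (SA _ _ (SM _ _ Sp Sq)).
have -> : (p + r * a) * (q + t * b) = p * (q + t * b) + (r * t) * (a * b) + (r * a) * q.
  by ring.
apply: idealD => //; last exact: (idealM _ iA Aq).
by apply: idealD => //; [exact: (idealMr _ iA Ap)|exact: (idealM _ iA Aab)].
Qed.


Lemma maximal_ideal_of (I : set R) : ideal I -> ~ I 1 ->
  exists N : MT, I `<=` sval N.
Proof.
move=> hI nI.
pose S1 := fun x : R => x = 1.
have H1 : forall a b, S1 a -> S1 b -> S1 (a * b).
  by rewrite /S1 => a b -> ->; rewrite mulr1.
have H2 : forall x, I x -> ~ S1 x by rewrite /S1 => x Ix ex; apply: nI; rewrite -ex.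
have [P [pP [IP [SP maxP]]]] := @prime_avoid I S1 hI (erefl _) H1 H2.
have mP : maximal_ideal P.
  split; first by case: pP.
  split; first by move=> /SP; apply.
  move=> J iJ PJ; have [J1|nJ1] := pselect (J 1); first by right.
  by left; apply: maxP => // x Jx; rewrite /S1 => ex; apply: nJ1; rewrite -ex.
by exists (@exist (set R) (@maximal_ideal R) P mP).
Qed.

Lemma max_ideal (N : MT) : ideal (sval N). Proof. exact: (proj1 (svalP N)). Qed.
Lemma max_not1 (N : MT) : ~ sval N 1. Proof. exact: (proj1 (proj2 (svalP N))). Qed.

Lemma max_prime (N : MT) : prime_ideal (sval N).
Proof.
case: N => N [iN [n1 mN]] /=; split => //; split => // a b Nab.
have [Na|na] := pselect (N a); first by left.
right; pose J := [set x | exists p r, N p /\ x = p + r * a].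
have iJ : ideal J.
  split; first by exists 0, 0; split; [exact: ideal0|rewrite mul0r addr0].
  split.
    move=> x y [p [r [Ap ->]]] [q [t [Aq ->]]]; exists (p + q), (r + t); split.
      exact: idealD. by rewrite mulrDl addrACA.
  move=> t x [p [r [Ap ->]]]; exists (t * p), (t * r); split; first exact: idealM.
  by rewrite mulrDr mulrA.
have NJ : N `<=` J by move=> x Nx; exists x, 0; rewrite mul0r addr0.
case: (mN J iJ NJ) => [eJ|[p [r [Np e1]]]].
  by exfalso; apply: na; rewrite -eJ; exists 0, 1; rewrite mul1r add0r; split => //; exact: ideal0.
have -> : b = b * (p + r * a) by rewrite -e1 mulr1.
rewrite mulrDr; apply: idealD => //; first exact: (idealM _ iN Np).
have -> : b * (r * a) = r * (a * b) by ring.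
exact: (idealM _ iN Nab).
Qed.

Lemma prime_pow (P : set R) (t : R) n : prime_ideal P -> P (t ^+ n) -> P t.
Proof.
move=> [iP [n1 pP]]; elim: n => [|n IH]; first by rewrite expr0.
by rewrite exprS => /pP [].
Qed.

Lemma prime_prod (P : set R) m (f : 'I_m -> R) : prime_ideal P ->
  P (\prod_(i < m) f i) -> exists i, P (f i).
Proof.
move=> [iP [n1 pP]]; elim: m f => [|m IH] f; first by rewrite big_ord0.
rewrite big_ord_recr /= => /pP [/IH [i hi]|h]; last by exists ord_max.
by exists (widen_ord (leqnSn m) i).
Qed.

Lemma ideal_prod (P : set R) m (f : 'I_m -> R) i : ideal P -> P (f i) ->
  P (\prod_(i < m) f i).
Proof. by move=> iP hP; rewrite (bigD1 i) //=; apply: idealMr. Qed.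

Variable v : MT -> F -> int.
Hypothesis hv : almost_dedekind_with v.

Lemma vM (N : MT) x y : x != 0 -> y != 0 -> v N (x * y) = v N x + v N y.
Proof. by case: (hv N) => [[h _] _]; apply: h. Qed.
Lemma vD (N : MT) x y : x != 0 -> y != 0 -> x + y != 0 ->
  Num.min (v N x) (v N y) <= v N (x + y).
Proof. by case: (hv N) => [[_ [h _]] _]; apply: h. Qed.
Lemma vsurj (N : MT) (n : int) : exists x, x != 0 /\ v N x = n.
Proof. by case: (hv N) => [[_ [_ h]] _]; apply: h. Qed.
Lemma locE (N : MT) : localization N = [set x | x != 0 -> 0 <= v N x].
Proof. by case: (hv N). Qed.

Lemma v1 (N : MT) : v N 1 = 0.
Proof.
have := vM N (oner_neq0 F) (oner_neq0 F); rewrite mulr1 => e.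
by apply/eqP; rewrite -(addrI _ (_ : v N 1 + 0 = v N 1 + v N 1)) ?addr0.
Qed.

Lemma vV (N : MT) x : x != 0 -> v N x^-1 = - v N x.
Proof.
move=> x0; have := vM N x0 (invr_neq0 x0); rewrite mulfV // v1 => e.
by rewrite -(addKr (v N x) (v N x^-1)) -e addr0.
Qed.

Lemma loc_inF (N : MT) (r : R) : r != 0 -> 0 <= v N (inF r).
Proof.
move=> r0; have : localization N (inF r).
  exists r, 1; split; first exact: max_not1.
  by rewrite inF1 divr1.
by rewrite locE => /(_ _); apply; rewrite inF_eq0.
Qed.

Lemma v_unit (N : MT) (s : R) : ~ sval N s -> v N (inF s) = 0.
Proof.
move=> ns; have s0 : s != 0 by apply/eqP => e; apply: ns; rewrite e; exact: ideal0 (max_ideal N).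
have sF : inF s != 0 by rewrite inF_eq0.
have : localization N (inF 1 / inF s) by exists 1, s.
rewrite locE inF1 mul1r => /(_ (invr_neq0 sF)); rewrite vV // oppr_ge0 => h.
by apply/eqP; rewrite eq_le h loc_inF.
Qed.

Lemma loc_of (N : MT) x : x != 0 -> 0 <= v N x ->
  exists a s, ~ sval N s /\ x = inF a / inF s.
Proof. by move=> x0 h; have : localization N x by rewrite locE. Qed.

Lemma v_in (N : MT) (r : R) : sval N r -> r != 0 -> 1 <= v N (inF r).
Proof.
move=> Nr r0; have rF : inF r != 0 by rewrite inF_eq0.
rewrite -gtz0_ge1.
rewrite lt_neqAle loc_inF // andbT; apply/negP => /eqP e.
have : 0 <= v N (inF r)^-1 by rewrite vV // -e oppr0.
move=> /(loc_of (invr_neq0 rF)) [a [s [ns e2]]].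
have sF : inF s != 0.
  by rewrite inF_eq0; apply/eqP => e3; apply: ns; rewrite e3; exact: (ideal0 (max_ideal N)).
apply: ns; have : inF s = inF a * inF r.
  have aF : inF a != 0.
    by apply/eqP => a0; move: e2; rewrite a0 mul0r => /eqP; rewrite invr_eq0 (negbTE rF).
  have -> : inF r = inF s / inF a by rewrite -[inF r]invrK e2 invf_div.
  by rewrite mulrC divfK.
by rewrite -inFM => /inF_inj ->; exact: (idealM _ (max_ideal N) Nr).
Qed.

Lemma unif (N : MT) : exists a, sval N a /\ a != 0 /\ v N (inF a) = 1.
Proof.
have [x [x0 vx]] := vsurj N 1.
have h0 : 0 <= v N x by rewrite vx.
have [a [s [ns ex]]] := loc_of x0 h0.
have sF : inF s != 0.
  by rewrite inF_eq0; apply/eqP => e3; apply: ns; rewrite e3; exact: (ideal0 (max_ideal N)).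
have aF : inF a != 0 by apply: contra x0; rewrite ex => /eqP ->; rewrite mul0r.
have va : v N (inF a) = 1.
  have : inF a = x * inF s by rewrite ex divfK.
  by move=> ->; rewrite vM // v_unit // vx addr0.
exists a; split; last by split => //; rewrite -inF_eq0.
apply: contrapT => na; by move: va; rewrite v_unit.
Qed.

Lemma ultra_sum (N : MT) (T : Type) (s : seq T) (f : T -> F) (k : int) :
  (forall p, f p = 0 \/ k <= v N (f p)) ->
  \sum_(p <- s) f p = 0 \/ k <= v N (\sum_(p <- s) f p).
Proof.
move=> h; apply: (big_ind (fun x => x = 0 \/ k <= v N x)); first by left.
  move=> x y [->|hx] [->|hy]; rewrite ?add0r ?addr0; auto.
  have [x0|x0] := eqVneq x 0; first by rewrite x0 add0r; right.
  have [y0|y0] := eqVneq y 0; first by rewrite y0 addr0; right.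
  have [s0|s0] := eqVneq (x + y) 0; first by left.
  right; apply: le_trans (vD N x0 y0 s0); by rewrite le_min hx hy.
by move=> p _; apply: h.
Qed.


Definition Dz (S : set R) : set (set R) := [set P | prime_ideal P /\ ~ (S `<=` P)].

Lemma Dz_open S : zariski_open (Dz S). Proof. by exists S. Qed.

Lemma Dz1P (P : set R) t : Dz [set t] P <-> prime_ideal P /\ ~ P t.
Proof.
split => [[pP h]|[pP h]]; split => //.
  by move=> Pt; apply: h => x ->.
by move=> h2; apply: h; apply: h2.
Qed.

Lemma zc_Dt (t : R) : zariski_compact (Dz [set t]).
Proof.
move=> Fam hFo hcov.
pose X := [set x | exists V, Fam V /\ Dz [set x] `<=` V].
have [n hn] : exists n, span X (t ^+ n).
  apply: contrapT => hno.
  pose S := fun y : R => exists n, y = t ^+ n.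
  have S1 : S 1 by exists 0%N; rewrite expr0.
  have SM : forall a b, S a -> S b -> S (a * b).
    by move=> a b [m ->] [k ->]; exists (m + k)%N; rewrite exprD.
  have SX : forall x, span X x -> ~ S x by move=> x hx [m ex]; apply: hno; exists m; rewrite -ex.
  have [P [pP [XP [SP _]]]] := prime_avoid (span_ideal X) S1 SM SX.
  have PD : Dz [set t] P.
    apply/Dz1P; split => // Pt; apply: (SP t Pt); exists 1%N; by rewrite expr1.
  have [V FV VP] := hcov P PD.
  have [S' eV] := hFo V FV.
  move: VP; rewrite eV => -[_ nS'].
  have [s0 [S's nPs]] : exists s0, S' s0 /\ ~ P s0.
    apply: contrapT => hh; apply: nS' => x Sx; apply: contrapT => nPx; apply: hh; by exists x.
  apply: nPs; apply: XP; apply: span_sub; exists V; split => //.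
  move=> Q /Dz1P [pQ nQ]; rewrite eV; split => // h; apply: nQ; exact: h.
case: hn => s [hs e].
have hX : forall i : 'I_(size s), X (nth (0, 0) s i).2.
  by move=> i; apply: hs; apply: mem_nth.
have [G hG] := choice hX.
exists (size s), G; split; first by move=> i; case: (hG i).
move=> P PD; have [pP nPt] := (@Dz1P P t).1 PD.
have [p [ps nPp]] : exists p, p \in s /\ ~ P p.2.
  apply: contrapT => hh; apply: nPt; apply: (prime_pow (n := n)) => //.
  rewrite e; apply: ideal_sum; first by case: pP.
  move=> p ps; apply: idealM; first by case: pP.
  by apply: contrapT => nPp; apply: hh; exists p.
have ip : (index p s < size s)%N by rewrite index_mem.
exists (Ordinal ip) => //.
case: (hG (Ordinal ip)) => _ /=; apply.
by apply/Dz1P; split => //; rewrite nth_index.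
Qed.


Definition catf (T : Type) n1 n2 (G1 : 'I_n1 -> T) (G2 : 'I_n2 -> T) : 'I_(n1 + n2) -> T :=
  fun i => match split i with inl j => G1 j | inr k => G2 k end.

Lemma catfP (T : Type) n1 n2 (G1 : 'I_n1 -> T) (G2 : 'I_n2 -> T) (P : T -> Prop) :
  (forall i, P (G1 i)) -> (forall i, P (G2 i)) -> forall i, P (catf G1 G2 i).
Proof. by move=> h1 h2 i; rewrite /catf; case: split. Qed.

Lemma catf_l (T : Type) n1 n2 (G1 : 'I_n1 -> T) (G2 : 'I_n2 -> T) j :
  catf G1 G2 (lshift n2 j) = G1 j.
Proof. by rewrite /catf (unsplitK (inl _ j)). Qed.

Lemma catf_r (T : Type) n1 n2 (G1 : 'I_n1 -> T) (G2 : 'I_n2 -> T) j :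
  catf G1 G2 (rshift n1 j) = G2 j.
Proof. by rewrite /catf (unsplitK (inr _ j)). Qed.

Lemma open_eq (W1 W2 : set MT) : Max_open W1 -> (forall N, W1 N <-> W2 N) -> Max_open W2.
Proof. by move=> [O [iO hO]] h; exists O; split => // N; rewrite -h. Qed.

Lemma open_bigcup (I : Type) (D : set I) (W : I -> set MT) :
  (forall i, D i -> Max_open (W i)) -> Max_open (\bigcup_(i in D) W i).
Proof.
move=> hW.
pose O := [set P | exists i, D i /\ exists O', inverse_open O' /\
   (forall N : MT, W i N <-> O' (sval N)) /\ O' P].
exists O; split.
  split; first by move=> P [i [_ [O' [[sub _] [_ hP]]]]]; apply: sub.
  move=> P [i [Di [O' [[sub bas] [eqv hP]]]]].
  have [n [U [hU [nU cl]]]] := bas P hP.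
  exists n, U; split => //; split => // Q pQ hQ.
  by exists i; split => //; exists O'; split => //; split => //; apply: cl.
move=> N; split.
  move=> [i Di WN]; have [O' [iO eqv]] := hW i Di.
  by exists i; split => //; exists O'; split => //; split => //; apply/eqv.
by move=> [i [Di [O' [_ [eqv hP]]]]]; exists i => //; apply/eqv.
Qed.

Lemma open_setU (W1 W2 : set MT) : Max_open W1 -> Max_open W2 -> Max_open (W1 `|` W2).
Proof.
move=> h1 h2; apply: (@open_eq (\bigcup_(b in [set: bool]) (if b then W1 else W2))).
  by apply: open_bigcup => -[].
move=> N; split; first by move=> [[] _ h]; [left|right].
by move=> [h|h]; [exists true|exists false].
Qed.

Lemma open_setI (W1 W2 : set MT) : Max_open W1 -> Max_open W2 -> Max_open (W1 `&` W2).
Proof.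
move=> [O1 [[s1 b1] e1]] [O2 [[s2 b2] e2]].
exists (O1 `&` O2); split; last first.
  move=> N; split => [[h1 h2]|[h1 h2]]; split.
  - exact/e1. - exact/e2. - exact/e1. - exact/e2.
split; first by move=> P [/s1].
move=> P [P1 P2].
have [n1 [U1 [hU1 [nU1 cl1]]]] := b1 P P1.
have [n2 [U2 [hU2 [nU2 cl2]]]] := b2 P P2.
exists (n1 + n2)%N, (catf U1 U2); split; first exact: (@catfP _ n1 n2 U1 U2 (fun U => zariski_open U /\ zariski_compact U)).
split; first by apply: (@catfP _ n1 n2 U1 U2 (fun U => ~ U P)).
move=> Q pQ hQ; split.
  by apply: cl1 => // j; have := hQ (lshift n2 j); rewrite catf_l.
by apply: cl2 => // j; have := hQ (rshift n1 j); rewrite catf_r.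
Qed.

Definition Vm (T : seq R) : set MT := [set N | forall t, t \in T -> sval N t].
Definition Dm (y : R) : set MT := [set N | ~ sval N y].

Lemma open_Vm T : Max_open (Vm T).
Proof.
exists [set P | prime_ideal P /\ forall t, t \in T -> P t]; split; last first.
  by move=> N; split => [h|[_ h]] //; split => //; exact: max_prime.
split; first by move=> P [].
move=> P [pP hP]; exists (size T), (fun i => Dz [set nth 0 T i]); split.
  by move=> i; split; [apply: Dz_open|apply: zc_Dt].
split.
  by move=> i /Dz1P [_]; apply; apply: hP; apply: mem_nth.
move=> Q pQ hQ; split => // t tT.
have iT : (index t T < size T)%N by rewrite index_mem.
have := hQ (Ordinal iT); rewrite (nth_index _ tT) => h.
by apply: contrapT => nQt; apply: h; apply/Dz1P.
Qed.

Lemma max_comax (N : MT) y : ~ sval N y -> exists n r, sval N n /\ n + r * y = 1.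
Proof.
case: N => N [iN [n1 mN]] /= ny.
pose J := [set x | exists p r, N p /\ x = p + r * y].
have iJ : ideal J.
  split; first by exists 0, 0; split; [exact: ideal0|rewrite mul0r addr0].
  split.
    move=> x z [p [r [Ap ->]]] [q [t [Aq ->]]]; exists (p + q), (r + t); split.
      exact: idealD. by rewrite mulrDl addrACA.
  move=> t x [p [r [Ap ->]]]; exists (t * p), (t * r); split; first exact: idealM.
  by rewrite mulrDr mulrA.
have NJ : N `<=` J by move=> x Nx; exists x, 0; rewrite mul0r addr0.
case: (mN J iJ NJ) => [eJ|[p [r [Np e1]]]]; last by exists p, r.
by exfalso; apply: ny; rewrite -eJ; exists 0, 1; rewrite mul1r add0r; split => //; exact: ideal0.
Qed.

Lemma open_Dm y : Max_open (Dm y).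
Proof.
exists [set Q | prime_ideal Q /\ exists n r, Q n /\ n + r * y = 1]; split; last first.
  move=> N; split => [h|[_ [n [r [Nn e]]]]].
    by split; [exact: max_prime|exact: max_comax].
  move=> Ny; apply: (@max_not1 N); rewrite -e; apply: (idealD (max_ideal N) Nn).
  exact: (idealM _ (max_ideal N) Ny).
split; first by move=> P [].
move=> P [pP [n [r [Pn e]]]]; exists 1%N, (fun _ => Dz [set n]); split.
  by move=> i; split; [apply: Dz_open|apply: zc_Dt].
split; first by move=> i /Dz1P [_]; apply.
move=> Q pQ hQ; split => //; exists n, r; split => //.
by apply: contrapT => nQ; apply: (hQ ord0); apply/Dz1P.
Qed.

Lemma open_setT : Max_open (@setT MT).
Proof. by apply: (open_eq (open_Vm [::])) => N; split => // _ t. Qed.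

Lemma open_set0 : Max_open (@set0 MT).
Proof.
apply: (open_eq (open_bigcup (D := @set0 unit) (W := fun _ => set0) _)) => //.
by move=> N; split => // -[].
Qed.

Lemma open_cst (P : Prop) : Max_open [set _ : MT | P].
Proof.
have [p|np] := pselect P.
  by apply: (open_eq open_setT) => N; split.
by apply: (open_eq open_set0) => N; split.
Qed.

Lemma Vm1C t : ~` Vm [:: t] = Dm t.
Proof.
apply/seteqP; split => N /=.
  by move=> h Nt; apply: h => s; rewrite inE => /eqP ->.
by move=> h h2; apply: h; apply: h2; rewrite inE.
Qed.

Lemma DmC y : ~` Dm y = Vm [:: y].
Proof. by rewrite -Vm1C setCK. Qed.

Definition clopen (W : set MT) := Max_open W /\ Max_open (~` W).

Lemma cover_restrict (T : Type) (Fam : set (set T)) (E B : set T) n (G' : 'I_n -> set T) :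
  (forall i, Fam (G' i) \/ G' i = E) -> B `<=` \bigcup_(i in [set: 'I_n]) G' i ->
  (forall x, B x -> ~ E x) -> (forall x, B x -> exists W, Fam W) ->
  exists n (G : 'I_n -> set T), (forall i, Fam (G i)) /\ B `<=` \bigcup_(i in [set: 'I_n]) G i.
Proof.
move=> hG' cov BE BF.
have [[x0 Bx0]|nB] := pselect (exists x, B x); last first.
  exists 0%N, (fun _ => set0); split; first by case.
  by move=> x Bx; exfalso; apply: nB; exists x.
have [W0 FW0] := BF x0 Bx0.
exists n, (fun i => if pselect (Fam (G' i)) then G' i else W0); split.
  by move=> i; case: pselect.
move=> x Bx; have [i _ Gix] := cov x Bx; exists i => //.
case: pselect => // nF; exfalso; case: (hG' i) => // eG; apply: (BE x Bx); by rewrite -eG.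
Qed.

Lemma cpt_sub (A B : set MT) : Max_compact A -> (forall N, B N -> A N) ->
  Max_open (~` B) -> Max_compact B.
Proof.
move=> hA BA oB Fam hop hcov.
have [n [G' [hG' cov]]] := hA [set W | Fam W \/ W = ~` B]
  (fun W hW => match hW with or_introl h => hop W h | or_intror e => eq_ind_r _ oB e end)
  (fun N AN => match pselect (B N) with
     | left BN => match hcov N BN with ex_intro2 W FW WN => ex_intro2 _ _ W (or_introl FW) WN end
     | right nBN => ex_intro2 _ _ (~` B) (or_intror erefl) nBN end).
apply: (cover_restrict (E := ~` B) hG' (fun N BN => cov N (BA N BN))).
  by move=> x Bx; apply.
by move=> x Bx; have [W FW _] := hcov x Bx; exists W.
Qed.

Lemma cpt_eqv (A B : set MT) : Max_compact A -> (forall N, A N <-> B N) -> Max_compact B.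
Proof.
move=> hA e Fam hop hcov.
have [n [G [hG cov]]] := hA Fam hop (fun N AN => hcov N ((e N).1 AN)).
by exists n, G; split => // N /e /cov.
Qed.

Lemma cpt_setU (A B : set MT) : Max_compact A -> Max_compact B -> Max_compact (A `|` B).
Proof.
move=> hA hB Fam hop hcov.
have [n1 [G1 [hG1 cov1]]] := hA Fam hop (fun N AN => hcov N (or_introl AN)).
have [n2 [G2 [hG2 cov2]]] := hB Fam hop (fun N BN => hcov N (or_intror BN)).
exists (n1 + n2)%N, (catf G1 G2); split; first exact: (@catfP _ n1 n2 G1 G2 Fam).
move=> N [/cov1 [j _ h]|/cov2 [j _ h]].
  by exists (lshift n2 j) => //; rewrite catf_l.
by exists (rshift n1 j) => //; rewrite catf_r.
Qed.

Lemma vX (N : MT) x n : x != 0 -> v N (x ^+ n) = v N x *+ n.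
Proof.
move=> x0; elim: n => [|n IH]; first by rewrite expr0 v1 mulr0n.
by rewrite exprS vM ?expf_neq0 // IH mulrS.
Qed.

Lemma local_elt (T : seq R) (j : R) (N : MT) (s : R) : j \in T -> j != 0 ->
  Vm T N -> sval N s ->
  exists y, ~ sval N y /\ forall Q : MT, Vm T Q -> ~ sval Q y -> sval Q s.
Proof.
move=> jT j0 VN Ns.
have [->|s0] := eqVneq s 0.
  exists 1; split; first exact: max_not1.
  by move=> Q _ _; exact: (ideal0 (max_ideal Q)).
have Nj := VN j jT.
pose K := `|v N (inF j)|%N.
have vj0 : 0 <= v N (inF j) by apply: loc_inF.
have eK : (K%:Z) = v N (inF j) by rewrite /K abszE ger0_norm.
have jF : inF j != 0 by rewrite inF_eq0.
have sF : inF s != 0 by rewrite inF_eq0.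
have xF : inF s ^+ K / inF j != 0 by rewrite mulf_neq0 ?expf_neq0 ?invr_neq0.
have vx : 0 <= v N (inF s ^+ K / inF j).
  rewrite vM ?expf_neq0 ?invr_neq0 // vV // vX // subr_ge0 -eK.
  have h1 := v_in Ns s0.
  rewrite -mulr_natr; move: h1; set z := v N (inF s); move=> h1.
  by rewrite natz -[X in X <= _]mul1r ler_wpM2r.
have [a [s' [ns' e]]] := loc_of xF vx.
have s'F : inF s' != 0.
  by rewrite inF_eq0; apply/eqP => e3; apply: ns'; rewrite e3; exact: (ideal0 (max_ideal N)).
have e2 : s ^+ K * s' = a * j.
  apply: inF_inj; rewrite !inFM; apply/eqP; rewrite -eqr_div // -e.
  by rewrite -tofracXn.
exists s'; split => // Q VQ nQ.
have pQ := max_prime Q.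
have : sval Q (s ^+ K * s') by rewrite e2; apply: (idealM _ (max_ideal Q)); apply: VQ.
case: pQ => _ [_ pQ] /pQ [h|//]; exact: (prime_pow (max_prime Q) h).
Qed.

Lemma combine (N : MT) m (B : 'I_m -> MT -> Prop) :
  (forall k, exists y, ~ sval N y /\ forall Q : MT, ~ sval Q y -> B k Q) ->
  exists y, ~ sval N y /\ forall Q : MT, ~ sval Q y -> forall k, B k Q.
Proof.
move=> h; have [f hf] := choice h.
exists (\prod_(k < m) f k); split.
  by move=> /(prime_prod (max_prime N)) [k]; case: (hf k).
move=> Q nQ k; case: (hf k) => _; apply => Qf; apply: nQ.
exact: (ideal_prod (max_ideal Q) Qf).
Qed.


Lemma core (T : seq R) (j : R) (N : MT) (O : set MT) : j \in T -> j != 0 ->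
  Max_open O -> O N -> Vm T N ->
  exists y, ~ sval N y /\ forall Q : MT, Vm T Q -> ~ sval Q y -> O Q.
Proof.
move=> jT j0 [O' [[sub bas] eqv]] ON VN.
have [n [U [hU [nU cl]]]] := bas _ ((eqv N).1 ON).
have step : forall i, exists y, ~ sval N y /\
    forall Q : MT, ~ sval Q y -> (Vm T Q -> ~ U i (sval Q)).
  move=> i; have [[S eU] cU] := hU i.
  have SN : S `<=` sval N.
    move=> x Sx; apply: contrapT => nx; apply: (nU i); rewrite eU; split.
      exact: max_prime.
    by move=> h; apply: nx; apply: h.
  have cov0 : U i `<=` \bigcup_(V in [set V | exists s, S s /\ V = Dz [set s]]) V.
    move=> P; rewrite eU => -[pP nS].
    have [s0 [Ss nPs]] : exists s0, S s0 /\ ~ P s0.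
      apply: contrapT => hh; apply: nS => x Sx; apply: contrapT => nPx; apply: hh; by exists x.
    by exists (Dz [set s0]); [exists s0|apply/Dz1P].
  have [m [G [hG cov]]] := cU [set V | exists s, S s /\ V = Dz [set s]]
    (fun V hV => match hV with ex_intro s (conj _ e) => eq_ind_r _ (Dz_open _) e end) cov0.
  have [sf hsf] := choice hG.
  have [y [ny hy]] := @combine N m (fun k Q => Vm T Q -> sval Q (sf k))
    (fun k => match local_elt jT j0 VN (SN _ (hsf k).1) with
       ex_intro y (conj h1 h2) => ex_intro _ y (conj h1 (fun Q nQ VQ => h2 Q VQ nQ)) end).
  exists y; split => // Q nQ VQ UQ.
  have [k _ Gk] := cov _ UQ.
  move: Gk; rewrite (hsf k).2 => /Dz1P [_]; apply; exact: hy.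
have [y [ny hy]] := combine step.
exists y; split => // Q VQ nQ; apply/eqv; apply: cl; first exact: max_prime.
by move=> i; exact: hy Q nQ i VQ.
Qed.


Lemma Vm_cpt (T : seq R) (j : R) : j \in T -> j != 0 -> Max_compact (Vm T).
Proof.
move=> jT j0 Fam hop hcov.
have step : forall N, Vm T N -> exists y, ~ sval N y /\
    exists W, Fam W /\ forall Q : MT, Vm T Q -> ~ sval Q y -> W Q.
  move=> N VN; have [W FW WN] := hcov N VN.
  have [y [ny hy]] := core jT j0 (hop W FW) WN VN.
  by exists y; split => //; exists W.
pose Y := [set y | exists N, Vm T N /\ ~ sval N y /\
    exists W, Fam W /\ forall Q : MT, Vm T Q -> ~ sval Q y -> W Q].
pose X := [set x | x \in T] `|` Y.
have X1 : span X 1.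
  apply: contrapT => n1.
  have [N' XN] := maximal_ideal_of (span_ideal X) n1.
  have VN' : Vm T N' by move=> t tT; apply: XN; apply: span_sub; left.
  have [y [ny [W [FW hW]]]] := step N' VN'.
  by apply ny; apply: XN; apply: span_sub; right; exists N'; split; [exact: VN'|split; [exact: ny|exists W]].
case: X1 => s [hs e1].
have [[N0 VN0]|nV] := pselect (exists N, Vm T N); last first.
  exists 0%N, (fun _ => set0); split; first by case.
  by move=> N VN; exfalso; apply: nV; exists N.
have [W0 FW0 _] := hcov N0 VN0.
have hi : forall i : 'I_(size s), exists W, Fam W /\
    (Y (nth (0, 0) s i).2 -> forall Q : MT, Vm T Q -> ~ sval Q (nth (0, 0) s i).2 -> W Q).
  move=> i; have [[N [_ [_ [W [FW hW]]]]]|nY] := pselect (Y (nth (0, 0) s i).2).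
    by exists W; split => // _.
  by exists W0; split => // h; exfalso; apply: nY.
have [G hG] := choice hi.
exists (size s), G; split; first by move=> i; case: (hG i).
move=> N VN.
have [p [ps nNp]] : exists p, p \in s /\ ~ sval N p.2.
  apply: contrapT => hh; apply: (@max_not1 N); rewrite e1.
  apply: ideal_sum; first exact: max_ideal.
  move=> p ps; apply: (idealM _ (max_ideal N)).
  by apply: contrapT => nNp; apply: hh; exists p.
have ip : (index p s < size s)%N by rewrite index_mem.
exists (Ordinal ip) => //.
have Yp : Y p.2.
  case: (hs p ps) => // pT; exfalso; exact: nNp (VN _ pT).
case: (hG (Ordinal ip)) => _ /=; rewrite (nth_index _ ps); apply => //.
Qed.

Lemma nbhd_cpt (N : MT) (O : set MT) : Max_open O -> O N ->
  exists W, clopen W /\ Max_compact W /\ W N /\ W `<=` O.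
Proof.
move=> oO ON.
have [j [Nj [j0 _]]] := unif N.
have jT : j \in [:: j] by rewrite inE.
have VN : Vm [:: j] N by move=> t; rewrite inE => /eqP ->.
have [y [ny hy]] := core jT j0 oO ON VN.
exists (Vm [:: j] `&` Dm y); split; [split|split].
- by apply: open_setI; [apply: open_Vm|apply: open_Dm].
- rewrite setCI Vm1C DmC; apply: open_setU; [apply: open_Dm|apply: open_Vm].
- apply: (cpt_sub (Vm_cpt jT j0)); first by move=> Q [].
  rewrite setCI Vm1C DmC; apply: open_setU; [apply: open_Dm|apply: open_Vm].
- by split; [split|move=> Q [VQ nQ]; apply: hy].
Qed.


Definition I0 : set F := [set x | exists r, x = inF r].
Definition real (h : MT -> int) :=
  exists I, invertible_ideal I /\ forall N, is_nu v I N (h N).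

Lemma imul_seq (I J : set F) (s : seq (F * F)) :
  (forall p, p \in s -> I p.1 /\ J p.2) -> ideal_mul I J (\sum_(p <- s) p.1 * p.2).
Proof.
move=> h; exists (size s), (fun i => (nth (0, 0) s i).1), (fun i => (nth (0, 0) s i).2).
split; first by move=> i; apply: h; apply: mem_nth.
by rewrite (big_nth (0, 0)) big_mkord.
Qed.

Lemma imul_seqE (I J : set F) x : ideal_mul I J x ->
  exists s : seq (F * F), (forall p, p \in s -> I p.1 /\ J p.2) /\ x = \sum_(p <- s) p.1 * p.2.
Proof.
move=> [n [a [b [hab ->]]]]; exists [seq (a i, b i) | i <- enum 'I_n]; split.
  by move=> p /mapP [i _ ->]; apply: hab.
by rewrite big_map big_enum.
Qed.

Lemma sum_inF (T : eqType) (s : seq T) (f : T -> F) :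
  (forall p, p \in s -> exists r, f p = inF r) -> exists r, \sum_(p <- s) f p = inF r.
Proof.
elim: s => [|p s IH] h; first by exists 0; rewrite big_nil inF0.
have [r1 e1] := h p (mem_head _ _).
have [r2 e2] : exists r, \sum_(p <- s) f p = inF r.
  by apply: IH => q qs; apply: h; rewrite inE qs orbT.
by exists (r1 + r2); rewrite big_cons e1 e2 inFD.
Qed.

Lemma imul0 (I J : set F) : ideal_mul I J 0.
Proof. by have := @imul_seq I J [::]; rewrite big_nil; apply. Qed.

Lemma imul1 (I J : set F) a b : I a -> J b -> ideal_mul I J (a * b).
Proof.
move=> Ia Jb; have := @imul_seq I J [:: (a, b)]; rewrite big_seq1; apply.
by move=> p; rewrite inE => /eqP ->.
Qed.

Lemma imul_add (I J : set F) x y : ideal_mul I J x -> ideal_mul I J y -> ideal_mul I J (x + y).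
Proof.
move=> /imul_seqE [s [hs ->]] /imul_seqE [t [ht ->]]; rewrite -big_cat; apply: imul_seq.
by move=> p; rewrite mem_cat => /orP [] ?; [apply: hs|apply: ht].
Qed.

Lemma imul_sum (I J : set F) (T : eqType) (s : seq T) (f : T -> F) :
  (forall p, p \in s -> ideal_mul I J (f p)) -> ideal_mul I J (\sum_(p <- s) f p).
Proof.
elim: s => [|p s IH] h; first by rewrite big_nil; apply: imul0.
rewrite big_cons; apply: imul_add; first exact: h (mem_head _ _).
by apply: IH => q qs; apply: h; rewrite inE qs orbT.
Qed.

Lemma imul_scale (I J : set F) r x : Rsubmodule J -> ideal_mul I J x ->
  ideal_mul I J (inF r * x).
Proof.
move=> [_ [_ sJ]] /imul_seqE [s [hs ->]]; rewrite big_distrr /=.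
apply: imul_sum => p ps; rewrite mulrCA; apply: imul1; first by case: (hs p ps).
by apply: sJ; case: (hs p ps).
Qed.

Lemma imulC (I J : set F) : ideal_mul I J = ideal_mul J I.
Proof.
have sub : forall I J : set F, ideal_mul I J `<=` ideal_mul J I.
  move=> A B x /imul_seqE [s [hs ->]]; apply: imul_sum => p ps; rewrite mulrC.
  by case: (hs p ps) => ? ?; apply: imul1.
by apply/seteqP; split; apply: sub.
Qed.

Lemma ultra_seq (N : MT) (T : eqType) (s : seq T) (f : T -> F) (k : int) :
  (forall p, p \in s -> f p = 0 \/ k <= v N (f p)) ->
  \sum_(p <- s) f p = 0 \/ k <= v N (\sum_(p <- s) f p).
Proof.
rewrite big_seq_cond => h.
apply: (big_ind (fun x => x = 0 \/ k <= v N x)); first by left.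
  move=> x y [->|hx] [->|hy]; rewrite ?add0r ?addr0; auto.
  have [x0|x0] := eqVneq x 0; first by rewrite x0 add0r; right.
  have [y0|y0] := eqVneq y 0; first by rewrite y0 addr0; right.
  have [s0|s0] := eqVneq (x + y) 0; first by left.
  right; apply: le_trans (vD N x0 y0 s0); by rewrite le_min hx hy.
by move=> p /andP [ps _]; apply: h.
Qed.

Lemma nu_attained (I : set F) (N : MT) h : is_nu v I N h ->
  exists a, I a /\ a != 0 /\ v N a = h.
Proof.
move=> [lo up]; apply: contrapT => hn.
have : h + 1 <= h.
  apply: up => i Ii i0; have := lo i Ii i0; rewrite le_eqVlt => /orP [/eqP e|].
    by exfalso; apply: hn; exists i; split => //; split.
  by rewrite -ltzD1 ltrD2r.
by rewrite -[X in _ <= X]addr0 lerD2l.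
Qed.

Lemma real0 : real (fun _ => 0).
Proof.
have sub : Rsubmodule I0.
  split; first by exists 0; rewrite inF0.
  split; first by move=> x y [a ->] [b ->]; exists (a + b); rewrite inFD.
  by move=> r x [a ->]; exists (r * a); rewrite inFM.
have fr : fractional_ideal I0.
  split => //; split; first by exists 1; split; [exists 1; rewrite inF1|exact: oner_neq0].
  by exists 1; split; [exact: oner_neq0|move=> x [a ->]; exists a; rewrite inF1 mul1r].
exists I0; split.
  split => //; exists I0; split => //; apply/seteqP; split.
    move=> x /imul_seqE [s [hs ->]]; apply: sum_inF => p ps.
    by case: (hs p ps) => [[a ->] [b ->]]; exists (a * b); rewrite inFM.
  by move=> x [a ->]; rewrite -[inF a]mulr1; apply: imul1; [exists a|exists 1; rewrite inF1].
move=> N; split.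
  move=> x [a ->]; rewrite inF_eq0; exact: loc_inF.
by move=> m /(_ 1); rewrite v1; apply; [exists 1; rewrite inF1|exact: oner_neq0].
Qed.

Lemma realN h : real h -> real (fun N => - h N).
Proof.
move=> [I [[fI [J [fJ e]]] hI]]; exists J; split.
  by split => //; exists I; split => //; rewrite imulC.
move=> N; have [a [Ia [a0 va]]] := nu_attained (hI N); split.
  move=> x Jx x0.
  have : ideal_mul I J (a * x) by apply: imul1.
  rewrite e => -[r er].
  have ax0 : a * x != 0 by rewrite mulf_neq0.
  have := loc_inF N (r := r); rewrite -er => /(_ _).
  have r0 : r != 0 by rewrite -inF_eq0 -er.
  move=> /(_ r0); rewrite vM // va => h0.
  by rewrite -subr_ge0 opprK addrC.
move=> m hm; apply: contrapT => /negP; rewrite -ltNge => hlt.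
have : ideal_mul I J 1 by rewrite e; exists 1; rewrite inF1.
move=> /imul_seqE [s [hs e1]].
have := @ultra_seq N _ s (fun p => p.1 * p.2) 1.
case.
- move=> p ps; have [Ip Jp] := hs p ps.
  have [->|p10] := eqVneq p.1 0; first by left; rewrite mul0r.
  have [->|p20] := eqVneq p.2 0; first by left; rewrite mulr0.
  right; rewrite vM // -gtz0_ge1.
  have l1 := (hI N).1 _ Ip p10; have l2 := hm _ Jp p20.
  have : h N + (- h N) < v N p.1 + v N p.2 by apply: ler_ltD l1 (lt_le_trans hlt l2).
  by rewrite subrr.
- by rewrite -e1 => /eqP; rewrite oner_eq0.
- by rewrite -e1 v1.
Qed.

Lemma fractional_mul (I1 I2 : set F) : fractional_ideal I1 -> fractional_ideal I2 ->
  fractional_ideal (ideal_mul I1 I2).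
Proof.
move=> [s1 [[x1 [Ix1 x10]] [d1 [d10 hd1]]]] [s2 [[x2 [Ix2 x20]] [d2 [d20 hd2]]]].
split.
  split; first exact: imul0.
  split; first by move=> x y; apply: imul_add.
  by move=> r x; apply: imul_scale.
split; first by exists (x1 * x2); split; [apply: imul1|rewrite mulf_neq0].
exists (d1 * d2); split; first by rewrite mulf_neq0.
move=> x /imul_seqE [s [hs ->]]; rewrite big_distrr /=.
apply: (@sum_inF _ s (fun p => inF (d1 * d2) * (p.1 * p.2))).
move=> p ps; have [Ip Jp] := hs p ps.
have [r1 e1] := hd1 _ Ip; have [r2 e2] := hd2 _ Jp.
by exists (r1 * r2); rewrite inFM mulrACA e1 e2 inFM.
Qed.

Lemma realD h1 h2 : real h1 -> real h2 -> real (fun N => h1 N + h2 N).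
Proof.
move=> [I1 [[fI1 [J1 [fJ1 e1]]] hI1]] [I2 [[fI2 [J2 [fJ2 e2]]] hI2]].
exists (ideal_mul I1 I2); split.
  split; first exact: fractional_mul.
  exists (ideal_mul J1 J2); split; first exact: fractional_mul.
  apply/seteqP; split.
    move=> x /imul_seqE [s [hs ->]]; apply: sum_inF => p ps.
    have [/imul_seqE [t1 [ht1 ->]] /imul_seqE [t2 [ht2 ->]]] := hs p ps.
    rewrite big_distrl /=; apply: sum_inF => q qs; rewrite big_distrr /=.
    apply: sum_inF => w ws; rewrite mulrACA.
    have [Iq1 Iq2] := ht1 q qs; have [Jw1 Jw2] := ht2 w ws.
    have : ideal_mul I1 J1 (q.1 * w.1) by apply: imul1.
    have : ideal_mul I2 J2 (q.2 * w.2) by apply: imul1.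
    rewrite e1 e2 => -[r2 ->] [r1 ->]; by exists (r1 * r2); rewrite inFM.
  move=> x [r ->]; rewrite -[inF r]mulr1; apply: imul_scale.
    by case: (fractional_mul fJ1 fJ2).
  have : ideal_mul I1 J1 1 by rewrite e1; exists 1; rewrite inF1.
  have : ideal_mul I2 J2 1 by rewrite e2; exists 1; rewrite inF1.
  move=> /imul_seqE [t2 [ht2 et2]] /imul_seqE [t1 [ht1 et1]].
  rewrite -[1]mulr1; rewrite {1}et1 et2 big_distrl /=; apply: imul_sum => q qs.
  rewrite big_distrr /=; apply: imul_sum => w ws; rewrite mulrACA.
  have [Iq1 Jq2] := ht1 q qs; have [Iw1 Jw2] := ht2 w ws.
  by apply: imul1; apply: imul1.
move=> N; have [a1 [Ia1 [a10 va1]]] := nu_attained (hI1 N).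
have [a2 [Ia2 [a20 va2]]] := nu_attained (hI2 N); split.
  move=> x /imul_seqE [s [hs ex]] x0.
  have := @ultra_seq N _ s (fun p => p.1 * p.2) (h1 N + h2 N).
  case; last by rewrite -ex.
  - move=> p ps; have [Ip Jp] := hs p ps.
    have [->|p10] := eqVneq p.1 0; first by left; rewrite mul0r.
    have [->|p20] := eqVneq p.2 0; first by left; rewrite mulr0.
    right; rewrite vM //; apply: lerD; [exact: (hI1 N).1|exact: (hI2 N).1].
  - by rewrite -ex => e0; move: x0; rewrite e0 eqxx.
move=> m hm; rewrite -va1 -va2 -vM //; apply: hm; first exact: imul1.
by rewrite mulf_neq0.
Qed.


Lemma real_ext h h' : real h -> (forall N, h N = h' N) -> real h'.
Proof. by move=> r e; have <- : h = h' by apply: funext. Qed.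

Lemma realZ (c : int) h : real h -> real (fun N => c * h N).
Proof.
move=> rh.
have pos : forall n : nat, real (fun N => n%:Z * h N).
  elim=> [|n IH]; first by apply: (real_ext real0) => N; rewrite mul0r.
  apply: (real_ext (realD IH rh)) => N.
  by rewrite -[in RHS](addn1 n) PoszD mulrDl mul1r.
case: c => n; first exact: pos.
apply: (real_ext (realN (pos n.+1))) => N.
by rewrite NegzE mulNr.
Qed.

Definition Ispan (L : seq R) : set F :=
  [set x | exists r, span [set l | l \in L] r /\ x = inF r].

Lemma inv_span (L : seq R) (a : R) : a \in L -> a != 0 ->
  (forall N : MT, exists t, t \in L /\ t != 0 /\
     forall l, l \in L -> l != 0 -> v N (inF t) <= v N (inF l)) ->
  invertible_ideal (Ispan L).
Proof.
move=> aL a0 H.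
pose X := [set l | l \in L].
have iX := span_ideal X.
have fI : fractional_ideal (Ispan L).
  split.
    split; first by exists 0; split; [exact: ideal0|rewrite inF0].
    split; first by move=> x y [r1 [h1 ->]] [r2 [h2 ->]]; exists (r1 + r2); split;
      [exact: idealD|rewrite inFD].
    by move=> r x [r1 [h1 ->]]; exists (r * r1); split; [exact: idealM|rewrite inFM].
  split; first by exists (inF a); split; [exists a; split => //; exact: span_sub|rewrite inF_eq0].
  by exists 1; split; [exact: oner_neq0|move=> x [r [_ ->]]; exists r; rewrite inF1 mul1r].
pose J := [set x : F | forall y, Ispan L y -> exists r, x * y = inF r].
have fJ : fractional_ideal J.
  split.
    split; first by move=> y _; exists 0; rewrite mul0r inF0.
    split.
      move=> x1 x2 h1 h2 y Iy; have [r1 e1] := h1 y Iy; have [r2 e2] := h2 y Iy.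
      by exists (r1 + r2); rewrite mulrDl e1 e2 inFD.
    move=> r x hx y Iy; have [r1 e1] := hx y Iy.
    by exists (r * r1); rewrite -mulrA e1 inFM.
  split; first by exists 1; split; [move=> y [r [_ ->]]; exists r; rewrite mul1r|exact: oner_neq0].
  exists a; split => // x Jx; rewrite mulrC; apply: Jx.
  by exists a; split => //; exact: span_sub.
split => //; exists J; split => //; apply/seteqP; split.
  move=> x /imul_seqE [s [hs ->]]; apply: sum_inF => p ps.
  by have [Ip Jp] := hs p ps; rewrite mulrC; apply: Jp.
pose P := fun r : R => ideal_mul (Ispan L) J (inF r).
have iP : ideal P.
  split; first by rewrite /P inF0; exact: imul0.
  split; first by move=> x y hx hy; rewrite /P inFD; apply: imul_add.
  by move=> r x hx; rewrite /P inFM; apply: imul_scale => //; case: fJ.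
suff P1 : P 1.
  move=> x [r ->]; rewrite -[inF r]mulr1 -inF1; apply: imul_scale => //; by case: fJ.
apply: contrapT => nP1.
have [N PN] := maximal_ideal_of iP nP1.
have [t [tL [t0 tmin]]] := H N.
have tF : inF t != 0 by rewrite inF_eq0.
have hl : forall l, l \in L -> exists al s, ~ sval N s /\ l * s = al * t.
  move=> l lL; have [->|l0] := eqVneq l 0.
    by exists 0, 1; split; [exact: max_not1|rewrite !mul0r].
  have lF : inF l != 0 by rewrite inF_eq0.
  have xF : inF l / inF t != 0 by rewrite mulf_neq0 ?invr_neq0.
  have vx : 0 <= v N (inF l / inF t).
    by rewrite vM ?invr_neq0 // vV // subr_ge0; apply: tmin.
  have [al [s [ns e]]] := loc_of xF vx.
  have sF : inF s != 0.
    by rewrite inF_eq0; apply/eqP => e3; apply: ns; rewrite e3; exact: (ideal0 (max_ideal N)).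
  exists al, s; split => //; apply: inF_inj; rewrite !inFM; apply/eqP.
  by rewrite -eqr_div // e.
have [s [ns hs]] : exists s, ~ sval N s /\ forall l, l \in L -> exists al, l * s = al * t.
  elim: (L) hl => [|l0 L' IH] hl'.
    by exists 1; split; [exact: max_not1|].
  have [al0 [s0 [ns0 e0]]] := hl' l0 (mem_head _ _).
  have [s' [ns' hs']] : exists s, ~ sval N s /\ forall l, l \in L' -> exists al, l * s = al * t.
    by apply: IH => l lL'; apply: hl'; rewrite inE lL' orbT.
  exists (s0 * s'); split.
    by case: (max_prime N) => _ [_ pN] /pN [].
  move=> l; rewrite inE => /orP [/eqP ->|lL'].
    by exists (al0 * s'); rewrite mulrA e0 mulrAC.
  have [al e] := hs' l lL'; exists (al * s0).
  by rewrite mulrCA e mulrCA mulrA.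
pose Dv := [set r | exists b, s * r = b * t].
have iDv : ideal Dv.
  split; first by exists 0; rewrite mulr0 mul0r.
  split; first by move=> x y [b1 e1] [b2 e2]; exists (b1 + b2); rewrite mulrDr e1 e2 mulrDl.
  by move=> r x [b e]; exists (r * b); rewrite mulrCA e mulrA.
have sD : span X `<=` Dv.
  apply: span_min => // l lL; have [al e] := hs l lL; exists al; by rewrite mulrC.
have Jx : J (inF s / inF t).
  move=> y [r [hr ->]]; have [b e] := sD _ hr.
  by exists b; rewrite mulrAC -inFM e inFM mulfK.
apply: ns; apply: PN; rewrite /P.
have -> : inF s = inF t * (inF s / inF t) by rewrite mulrC divfK.
apply: imul1 => //; exists t; split => //; exact: span_sub.
Qed.


Definition delta (M0 : MT) : MT -> int := fun N => if `[< N = M0 >] then 1 else 0.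

Lemma real_delta (M0 : MT) : isolated M0 -> real (delta M0).
Proof.
move=> iso.
have [a [Ma [a0 va]]] := unif M0.
have aT : a \in [:: a] by rewrite inE.
have VM : Vm [:: a] M0 by move=> t; rewrite inE => /eqP ->.
have [y [ny hy]] := core aT a0 iso (erefl M0) VM.
have [n [r [Mn e]]] := max_comax ny.
pose L := [:: a; n].
have aL : a \in L by rewrite inE eqxx.
have nL : n \in L by rewrite !inE eqxx orbT.
have LM : forall l, l \in L -> sval M0 l.
  by move=> l; rewrite !inE => /orP [/eqP ->|/eqP ->].
have key : forall Q : MT, Q <> M0 -> exists t, t \in L /\ ~ sval Q t.
  move=> Q nQ; apply: contrapT => hh.
  have hQ : forall t, t \in L -> sval Q t.
    by move=> t tL; apply: contrapT => nt; apply: hh; exists t.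
  apply: nQ; apply: hy.
    by move=> t; rewrite inE => /eqP ->; apply: hQ.
  move=> Qy; apply: (@max_not1 Q); rewrite -e; apply: (idealD (max_ideal Q)).
    exact: hQ.
  exact: (idealM _ (max_ideal Q) Qy).
have t0 : forall (Q : MT) t, ~ sval Q t -> t != 0.
  by move=> Q t nt; apply/eqP => e0; apply: nt; rewrite e0; exact: (ideal0 (max_ideal Q)).
exists (Ispan L); split.
  apply: (inv_span aL a0) => N.
  have [->|nN] := pselect (N = M0).
    exists a; split => //; split => // l lL l0; rewrite va; exact: v_in (LM l lL) l0.
  have [t [tL nt]] := key N nN; exists t; split => //; split; first exact: t0 nt.
  by move=> l lL l0; rewrite v_unit //; apply: loc_inF.
have sM : span [set l | l \in L] `<=` sval M0.
  by apply: span_min; [exact: max_ideal|move=> l; apply: LM].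
move=> N; rewrite /delta; have [->|nN] := pselect (N = M0).
  rewrite asboolT //; split.
    move=> x [q [hq ->]]; rewrite inF_eq0 => q0; exact: v_in (sM _ hq) q0.
  move=> m hm; rewrite -va; apply: hm; last by rewrite inF_eq0.
  by exists a; split => //; apply: span_sub.
rewrite asboolF //; split.
  by move=> x [q [hq ->]]; rewrite inF_eq0 => q0; exact: loc_inF.
have [t [tL nt]] := key N nN.
move=> m hm; rewrite -(v_unit nt); apply: hm; last by rewrite inF_eq0; exact: t0 nt.
by exists t; split => //; apply: span_sub.
Qed.

Lemma real_fin n (pts : 'I_n -> MT) : (forall i, isolated (pts i)) ->
  forall h, (forall N, h N != 0 -> exists i, N = pts i) -> real h.
Proof.
elim: n pts => [|n IH] pts iso h hh.
  apply: (real_ext real0) => N; apply/eqP; rewrite eq_sym; apply: contraT => /hh [[]] //.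
pose M0 := pts ord_max.
pose h' := fun N => if `[< N = M0 >] then 0 else h N.
have r' : real h'.
  refine (@IH (fun i => pts (widen_ord (leqnSn n) i)) (fun i => iso _) h' _).
  move=> N.
  rewrite /h'; have [eN|nN] := pselect (N = M0); first by rewrite asboolT // eqxx.
  rewrite asboolF // => /hh [i ei].
  have ilt : (i < n)%N.
    rewrite ltn_neqAle -ltnS ltn_ord andbT; apply/eqP => ei'; apply: nN; rewrite ei.
    by congr pts; apply: val_inj.
  by exists (Ordinal ilt); rewrite ei; congr pts; apply: val_inj.
apply: (real_ext (realD r' (realZ (h M0) (real_delta (iso ord_max))))) => N.
rewrite /h' /delta; have [->|nN] := pselect (N = M0).
  by rewrite asboolT // add0r mulr1.
by rewrite asboolF // mulr0 addr0.
Qed.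


Lemma cpt0 : Max_compact (@set0 MT).
Proof. by move=> Fam _ _; exists 0%N, (fun _ => set0); split => //; case. Qed.

Lemma compl_supp (f : MT -> int) : Max_open (f @^-1` [set 0]) ->
  Max_open (~` [set N | f N != 0]).
Proof.
move=> h; apply: (open_eq h) => N /=; split; first by move=> ->; rewrite eqxx.
by move=> hh; apply/eqP/negPn/negP.
Qed.

Lemma Cc_add (f1 f2 : MT -> int) : Cc_Max f1 -> Cc_Max f2 -> Cc_Max (fun N => f1 N + f2 N).
Proof.
move=> [p1 c1] [p2 c2].
have pre : forall A : set int, Max_open ((fun N => f1 N + f2 N) @^-1` A).
  move=> A; apply: (open_eq (open_bigcup (D := [set p : int * int | A (p.1 + p.2)])
    (W := fun p => f1 @^-1` [set p.1] `&` f2 @^-1` [set p.2]) _)).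
    by move=> p _; apply: open_setI.
  move=> N; split; first by move=> [p hp [/= e1 e2]]; rewrite /= e1 e2.
  by move=> hA; exists (f1 N, f2 N).
split => //; apply: (cpt_sub (cpt_setU c1 c2)); last exact: compl_supp.
move=> N /= h; apply: contrapT => /not_orP [/negP h1 /negP h2].
by move: h; rewrite (eqP (negbNE h1)) (eqP (negbNE h2)) addr0 eqxx.
Qed.

Lemma Cc_neg (f : MT -> int) : Cc_Max f -> Cc_Max (fun N => - f N).
Proof.
move=> [p c]; split.
  by move=> A; apply: (open_eq (p [set z | A (- z)])).
by apply: (cpt_eqv c) => N /=; rewrite oppr_eq0.
Qed.

Definition Iso : set MT := [set N | isolated N].

Lemma open_Iso : Max_open Iso.
Proof.
apply: (open_eq (open_bigcup (D := Iso) (W := fun N => [set N]) _)) => //.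
by move=> N; split => [[M iM ->]|iN] //; exists N.
Qed.

Lemma cpt_Bd (K : set MT) : Max_compact K -> Bd_compact [set x : BdT R | K (sval x)].
Proof.
move=> cK Fam hop hcov.
pose Fam2 := [set O : set MT | (Max_open O /\ exists W, Fam W /\ forall x, W x <-> O (sval x))
   \/ O = Iso].
have [n [G' [hG' cov]]] : exists n (G' : 'I_n -> set MT), (forall i, Fam2 (G' i)) /\
    K `<=` \bigcup_(i in [set: 'I_n]) G' i.
  apply: cK.
    by move=> O [[]|->] //; exact: open_Iso.
  move=> N KN; have [iN|nI] := pselect (isolated N); first by exists Iso => //; right.
  have [W FW Wx] := hcov (exist _ N nI) KN.
  have [O [oO eqv]] := hop W FW.
  exists O; last exact: (eqv _).1 Wx.
  by left; split => //; exists W.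
apply: (@cover_restrict _ Fam [set x | Iso (sval x)] _ n (fun i => [set x | G' i (sval x)])).
- move=> i; case: (hG' i) => [[_ [W [FW eqv]]]|->]; last by right.
  by left; have -> : [set x | G' i (sval x)] = W by apply/seteqP; split => x /eqv.
- by move=> x /cov [i _ h]; exists i.
- by move=> x _; case: x.
- by move=> x /hcov [W FW _]; exists W.
Qed.

Lemma Bd_cpt_Max (K : set (BdT R)) : Bd_compact K ->
  Max_compact [set N | exists x, K x /\ sval x = N].
Proof.
move=> cK Fam hop hcov.
pose FamB := [set V | exists O, Fam O /\ V = [set x : BdT R | O (sval x)]].
have [n [G [hG cov]]] : exists n (G : 'I_n -> set (BdT R)), (forall i, FamB (G i)) /\
    K `<=` \bigcup_(i in [set: 'I_n]) G i.
  apply: cK.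
    by move=> V [O [FO ->]]; exists O; split; [exact: hop|].
  move=> x Kx; have [O FO Ox] : exists2 O, Fam O & O (sval x).
    by apply: hcov; exists x.
  by exists [set y : BdT R | O (sval y)] => //; exists O.
have [Of hOf] := choice hG.
exists n, Of; split; first by move=> i; case: (hOf i).
move=> N [x [Kx <-]]; have [i _ Gx] := cov x Kx; exists i => //.
by move: Gx; rewrite (hOf i).2.
Qed.

Fixpoint extf (Wi : nat -> set MT) (c : nat -> int) (n : nat) (N : MT) : int :=
  match n with 0%N => 0 | n'.+1 => if `[< Wi n' N >] then c n' else extf Wi c n' N end.

Lemma extf_open Wi c : (forall i, clopen (Wi i)) ->
  forall n (A : set int), Max_open (extf Wi c n @^-1` A).
Proof.
move=> hW; elim=> [|n IH] A /=.
  by apply: (open_eq (open_cst (A 0))).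
have [o1 o2] := hW n.
apply: (open_eq (open_setU (open_setI o1 (open_cst (A (c n)))) (open_setI o2 (IH A)))).
move=> N /=; have [WN|nWN] := pselect (Wi n N).
  by rewrite asboolT //; split => [[[_ //]|[]//]|h]; left.
by rewrite asboolF //; split => [[[]//|[]//]|h]; right.
Qed.

Lemma extf_supp Wi c n N : extf Wi c n N != 0 -> exists i, (i < n)%N /\ Wi i N.
Proof.
elim: n => [|n IH]; first by move=> /eqP h; exfalso; exact: h erefl.
rewrite /=.
have [WN|nWN] := pselect (Wi n N); first by move=> _; exists n.
rewrite asboolF // => /IH [i [lt hi]]; exists i; split => //; exact: ltnW.
Qed.

Lemma cpt_union Wi : (forall i, Max_compact (Wi i)) ->
  forall n, Max_compact [set N : MT | exists i, (i < n)%N /\ Wi i N].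
Proof.
move=> hW; elim=> [|n IH].
  by apply: (cpt_eqv cpt0) => N; split => // -[i []].
apply: (cpt_eqv (cpt_setU IH (hW n))) => N; split.
  by move=> [[i [lt h]]|h]; [exists i; split => //; exact: ltnW|exists n].
move=> [i [lt h]]; move: lt; rewrite ltnS leq_eqVlt => /orP [/eqP ei|lt].
  by right; rewrite -ei.
by left; exists i.
Qed.

Lemma extension (g : BdT R -> int) : Cc_Bd g ->
  exists f, Cc_Max f /\ forall x, f (sval x) = g x.
Proof.
move=> [pre cpt].
have hW : forall x : BdT R, exists W, (clopen W /\ Max_compact W) /\ W (sval x) /\
    forall y : BdT R, W (sval y) -> g y = g x.
  move=> x; have [O [oO eqv]] := pre [set g x].
  have Ox : O (sval x) by apply/eqv.
  have [W [cW [kW [Wx WO]]]] := nbhd_cpt oO Ox.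
  exists W; split => //; split => // y /WO /eqv; done.
have [Wf hWf] := choice hW.
pose FamB := [set V | exists x, V = [set y : BdT R | Wf x (sval y)]].
have [m [G [hG cov]]] : exists m (G : 'I_m -> set (BdT R)), (forall i, FamB (G i)) /\
    [set x | g x != 0] `<=` \bigcup_(i in [set: 'I_m]) G i.
  apply: cpt.
    by move=> V [x ->]; exists (Wf x); split; [exact: (hWf x).1.1.1|].
  by move=> x _; exists [set y : BdT R | Wf x (sval y)]; [exists x|exact: (hWf x).2.1].
have [xs hxs] := choice hG.
pose Wi := fun i : nat => oapp (fun k : 'I_m => Wf (xs k)) set0 (insub i).
pose c := fun i : nat => oapp (fun k : 'I_m => g (xs k)) 0 (insub i).
have cW : forall i, clopen (Wi i) /\ Max_compact (Wi i).
  move=> i; rewrite /Wi; case: insub => [k|] /=; first exact: (hWf (xs k)).1.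
  split; last exact: cpt0.
  by split; [exact: open_set0|rewrite setC0; exact: open_setT].
have hc : forall i (y : BdT R), Wi i (sval y) -> g y = c i.
  move=> i y; rewrite /Wi /c; case: insub => [k|] //= h.
  exact: (hWf (xs k)).2.2.
have hcov : forall y : BdT R, g y != 0 -> exists i, (i < m)%N /\ Wi i (sval y).
  move=> y gy; have [k _ Gk] := cov y gy; exists (val k); split; first exact: ltn_ord.
  have e : insub (val k) = Some k := valK k.
  rewrite /Wi e /=; move: Gk; by rewrite (hxs k).
exists (extf Wi c m); split.
  split; first by apply: extf_open => i; case: (cW i).
  have hU := @cpt_union Wi (fun i => (cW i).2) m.
  apply: (cpt_sub hU).
    by move=> N /extf_supp.
  by apply: compl_supp; apply: extf_open => i; case: (cW i).
have key : forall n (y : BdT R), ((exists i, (i < n)%N /\ Wi i (sval y)) -> extf Wi c n (sval y) = g y)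
    /\ (~ (exists i, (i < n)%N /\ Wi i (sval y)) -> extf Wi c n (sval y) = 0).
  elim=> [|n IH] y /=; first by split => // -[i []].
  have [WN|nWN] := pselect (Wi n (sval y)).
    by rewrite asboolT //; split => [_|h]; [rewrite (hc n y WN)|exfalso; apply: h; exists n].
  rewrite asboolF //; have [IH1 IH2] := IH y; split.
    move=> [i [lt hi]]; apply: IH1; exists i; split => //.
    move: lt; rewrite ltnS leq_eqVlt => /orP [/eqP ei|//].
    by exfalso; apply: nWN; rewrite -ei.
  by move=> h; apply: IH2 => -[i [lt hi]]; apply: h; exists i; split => //; exact: ltnW.
move=> y; have [ex|nex] := pselect (exists i, (i < m)%N /\ Wi i (sval y)).
  exact: (key m y).1.
rewrite (key m y).2 //; apply/esym/eqP; apply: contraT => /hcov; done.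
Qed.

Lemma Cc_Bd_of (f : MT -> int) : Cc_Max f -> Cc_Bd (fun x : BdT R => f (sval x)).
Proof.
move=> [p c]; split; last exact: (cpt_Bd c).
by move=> A; exists (f @^-1` A); split.
Qed.

Lemma vanish (h : MT -> int) : Cc_Max h -> (forall x : BdT R, h (sval x) = 0) -> Gcap v h.
Proof.
move=> ch hx; split => //; case: ch => _ cpt.
have [n [G [hG cov]]] : exists n (G : 'I_n -> set MT),
    (forall i, [set W | exists N, isolated N /\ W = [set N]] (G i)) /\
    [set N | h N != 0] `<=` \bigcup_(i in [set: 'I_n]) G i.
  apply: cpt; first by move=> W [N [iN ->]].
  move=> N hN; have [iN|nI] := pselect (isolated N).
    by exists [set N]; [exists N|].
  by exfalso; have := hx (exist _ N nI); rewrite /= => e; move: hN; rewrite /= e eqxx.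
have [pts hpts] := choice hG.
apply: (@real_fin n pts); first by move=> i; case: (hpts i).
move=> N hN; have [i _ Gi] := cov N hN; exists i.
by move: Gi; rewrite (hpts i).2.
Qed.


Definition phi (g : BdT R -> int) : MT -> int :=
  match pselect (exists f, Cc_Max f /\ forall x, f (sval x) = g x) with
  | left p => sval (cid p)
  | right _ => fun _ => 0
  end.

Lemma phiP g : (exists f, Cc_Max f /\ forall x, f (sval x) = g x) ->
  Cc_Max (phi g) /\ forall x, phi g (sval x) = g x.
Proof. by rewrite /phi; case: pselect => // p _; exact: (svalP (cid p)). Qed.

End Main.

Theorem proposition4p8 (R : idomainType) (v : MaxT R -> {fraction R} -> int)
  (hv : almost_dedekind_with v) :
  exists phi : (BdT R -> int) -> (MaxT R -> int),
    (forall g, Cc_Bd g -> Cc_Max (phi g)) /\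
    (forall g1 g2, Cc_Bd g1 -> Cc_Bd g2 ->
       Gcap v (fun M => phi (fun x => g1 x + g2 x) M - phi g1 M - phi g2 M)) /\
    (forall f, Cc_Max f -> exists g, Cc_Bd g /\ Gcap v (fun M => f M - phi g M)).
Proof.
exists (@phi R); split; [|split].
- by move=> g cg; exact: (phiP (extension hv cg)).1.
- move=> g1 g2 c1 c2.
  have [C1 E1] := phiP (extension hv c1).
  have [C2 E2] := phiP (extension hv c2).
  have [C12 E12] : Cc_Max (phi (fun x => g1 x + g2 x)) /\
      forall x, phi (fun x => g1 x + g2 x) (sval x) = g1 x + g2 x.
    apply: phiP; exists (fun N => phi g1 N + phi g2 N); split; first exact: Cc_add.
    by move=> x; rewrite E1 E2.
  apply: (vanish hv); first by apply: Cc_add; [apply: Cc_add => //; exact: Cc_neg|exact: Cc_neg].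
  by move=> x; rewrite E12 E1 E2; ring.
- move=> f cf; exists (fun x => f (sval x)); split; first exact: Cc_Bd_of.
  have [C E] := phiP (ex_intro _ f (conj cf (fun x => erefl))).
  apply: (vanish hv); first by apply: Cc_add => //; exact: Cc_neg.
  by move=> x; rewrite E subrr.
Qed.
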